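(* Let $\mathcal{S}\subset\mathbb{R}_{\ge0}$ be measurable with positive Lebesgue measure, let $G_1,\dots,G_K$ be probability distributions on $\mathbb{R}$, and let $\mathcal{G}=\mathrm{ConvexHull}(G_1,\dots,G_K)=\{\sum_{j=1}^K\pi_jG_j:\pi_j\ge0,\sum_j\pi_j=1\}$. Then $$\mathrm{Tilt}[\mathcal{G}]=\mathrm{ConvexHull}(\mathrm{Tilt}[G_1],\dots,\mathrm{Tilt}[G_K]).$$
   Context: $\varphi(z;\mu)$ is the $\mathrm{N}(\mu,1)$ density, $\varphi^{\mathrm{fold}}(z;\mu)=\varphi(z;\mu)+\varphi(-z;\mu)$, $\Phi(\mathcal{S};\mu)=\int_{\mathcal{S}}\varphi^{\mathrm{fold}}(z;\mu)dz$, $\mathrm{Tilt}[G](d\mu)=\frac{\Phi(\mathcal{S};\mu)G(d\mu)}{\int\Phi(\mathcal{S};\mu')G(d\mu')}$, and $\mathrm{Tilt}[\mathcal{G}]=\{\mathrm{Tilt}[G]:G\in\mathcal{G}\}$. *)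

(* Defs.v *)
From HB Require Import structures.
From mathcomp Require Import all_boot all_order all_algebra.
From mathcomp Require Import all_classical all_reals all_analysis.
Set Implicit Arguments. Unset Strict Implicit. Unset Printing Implicit Defensive.
Import Order.TTheory GRing.Theory Num.Theory.
Local Open Scope classical_set_scope.
Local Open Scope ring_scope.

Definition phi {R : realType} (z mu : R) : R := normal_pdf mu 1 z.

Definition phifold {R : realType} (z mu : R) : R := phi z mu + phi (- z) mu.

Definition PhiS {R : realType} (S : set R) (mu : R) : \bar R :=
  (\int[lebesgue_measure]_(z in S) (phifold z mu)%:E)%E.

Definition Tilt {R : realType} (S : set R)
    (G : {measure set (measurableTypeR R) -> \bar R}) : set R -> \bar R :=
  fun A => ((\int[G]_(m in A) PhiS S m) *
            ((fine (\int[G]_m PhiS S m))^-1)%:E)%E.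

Definition simplex {R : realType} (K : nat) (pi : 'I_K -> R) : Prop :=
  (forall j, 0 <= pi j) /\ \sum_(j < K) pi j = 1.

Definition mixture {R : realType} (K : nat) (pi : 'I_K -> R)
    (F : 'I_K -> set R -> \bar R) : set R -> \bar R :=
  fun A => (\sum_(j < K) (pi j)%:E * F j A)%E.

Definition eqdist {R : realType} (F1 F2 : set R -> \bar R) : Prop :=
  forall A : set (measurableTypeR R), measurable A -> F1 A = F2 A.

Definition ConvexHull {R : realType} (K : nat)
    (F : 'I_K -> set R -> \bar R) (H : set R -> \bar R) : Prop :=
  exists pi : 'I_K -> R, simplex pi /\ eqdist H (mixture pi F).

(* Main.v *)
Require Import Defs.
From HB Require Import structures.
From mathcomp Require Import all_boot all_order all_algebra.
From mathcomp Require Import all_classical all_reals all_analysis.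
From mathcomp Require Import measurable_realfun.
From mathcomp.algebra_tactics Require Import ring lra.
Import Order.TTheory GRing.Theory Num.Theory.
Local Open Scope classical_set_scope.
Local Open Scope ring_scope.

Section gt0.
Local Open Scope ereal_scope.
Lemma integral_gt0 d (T : measurableType d) (R : realType)
  (mu : {measure set T -> \bar R}) (D : set T) (f : T -> \bar R) :
  measurable D -> measurable_fun D f -> (forall x, D x -> (0 < f x)%E) ->
  (0 < mu D)%E -> (0 < \int[mu]_(x in D) f x)%E.
Proof.
move=> mD mf fpos muD.
have f0 : forall x, D x -> (0 <= f x)%E by move=> x /fpos /ltW.
rewrite lt_neqAle integral_ge0 // andbT eq_sym; apply/negP => /eqP I0.
have : \int[mu]_(x in D) `|f x| = 0%E.
  by rewrite -I0; apply: eq_integral => x /[!inE] Dx; rewrite gee0_abs // f0.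
move/(ae_eq_integral_abs mu mD mf) => [N [mN N0 sN]].
have : mu D = 0%E.
  apply: (subset_measure0 mD mN) => // x Dx; apply: sN => /= /(_ Dx) fx0.
  by move: (fpos x Dx); rewrite fx0 ltxx.
by move=> muD0; move: muD; rewrite muD0 ltxx.
Qed.
End gt0.

Section phi.
Variable R : realType.

Lemma phiE (z m : R) : phi z m = normal_pdf 0 1 (z - m).
Proof.
by rewrite /phi /normal_pdf oner_eq0 /normal_fun subr0.
Qed.

Lemma phiN (z m : R) : phi (- z) m = phi z (- m).
Proof.
by rewrite /phi /normal_pdf oner_eq0 /normal_fun -opprD sqrrN opprK.
Qed.

Lemma phi_gt0 (z m : R) : 0 < phi z m.
Proof.
by rewrite /phi /normal_pdf oner_eq0 mulr_gt0 ?expR_gt0 ?normal_peak_gt0.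
Qed.

Lemma phifold_gt0 (z m : R) : 0 < phifold z m.
Proof. by rewrite /phifold addr_gt0 ?phi_gt0. Qed.

Lemma measurable_phi m : measurable_fun setT (fun z : R => phi z m).
Proof.
rewrite /phi; exact: measurable_normal_pdf.
Qed.

Lemma measurable_phifold m : measurable_fun setT (fun z : R => phifold z m).
Proof.
apply: measurable_funD; first exact: measurable_phi.
under eq_fun do rewrite phiN; exact: measurable_phi.
Qed.

Lemma int_phi (m : R) : (\int[lebesgue_measure]_z (@phi R z m)%:E = 1)%E.
Proof. exact: integral_normal_pdf. Qed.


Variable S : set (measurableTypeR R).
Hypothesis mS : measurable S.

Lemma PhiS_gt0 (m : R) : (0 < lebesgue_measure S)%E -> (0 < PhiS S m)%E.
Proof.
move=> S0; apply: integral_gt0 => //.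
- by apply/measurable_funTS/measurable_EFinP; exact: measurable_phifold.
- by move=> x _; rewrite lte_fin phifold_gt0.
Qed.

Lemma PhiS_ge0 (m : R) : (0 <= PhiS S m)%E.
Proof. by apply: integral_ge0 => x _; rewrite lee_fin ltW ?phifold_gt0. Qed.

Lemma PhiS_le2 (m : R) : (PhiS S m <= 2%:E)%E.
Proof.
apply: (@le_trans _ _ (\int[lebesgue_measure]_z (phifold z m)%:E)%E).
  apply: ge0_subset_integral => //.
  - by apply/measurable_EFinP; exact: measurable_phifold.
  - by move=> x _; rewrite lee_fin ltW ?phifold_gt0.
rewrite /phifold.
under eq_integral do rewrite EFinD phiN.
rewrite ge0_integralD //.
- by rewrite !int_phi -EFinD lee_fin.
- by move=> x _; rewrite lee_fin ltW ?phi_gt0.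
- by apply/measurable_EFinP; exact: measurable_phi.
- by move=> x _; rewrite lee_fin ltW ?phi_gt0.
- by apply/measurable_EFinP; exact: measurable_phi.
Qed.

Definition fPhi (p : R * R) : \bar R := (phifold p.2 p.1 * \1_S p.2)%:E.

Lemma measurable_fPhi : measurable_fun setT fPhi.
Proof.
apply/measurable_EFinP; apply: measurable_funM.
  rewrite /phifold.
  under eq_fun do rewrite !phiE.
  apply: measurable_funD.
    apply: measurableT_comp; first exact: measurable_normal_pdf.
    exact: measurable_funB.
  apply: measurableT_comp; first exact: measurable_normal_pdf.
  apply: measurable_funB => //; apply: measurableT_comp => //.
apply: measurableT_comp => //; exact: measurable_indic.
Qed.

Lemma measurable_PhiS : measurable_fun setT (PhiS S).
Proof.
have -> : PhiS S = fubini_F lebesgue_measure fPhi.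
  apply/funext => m; rewrite /PhiS /fubini_F [LHS]integral_mkcond.

  apply: eq_integral => z _; rewrite /fPhi /patch indicE /=.
  by case: ifP => _; rewrite ?mulr1 ?mulr0.

apply: measurable_fun_fubini_tonelli_F.
  exact: measurable_fPhi.
by move=> p; rewrite /fPhi lee_fin mulr_ge0 // ?ltW ?phifold_gt0 // indicE; case: (_ \in _).
Qed.

End phi.

Section mix.
Variables (R : realType) (K : nat) (G : 'I_K -> probability (measurableTypeR R) R).
Variables (p : 'I_K -> R) (p0 : forall j, 0 <= p j).

Definition mk (k : nat) : {measure set (measurableTypeR R) -> \bar R} :=
  match insub k with
  | Some j => mscale (NngNum (p0 j)) (G j)
  | None => mzero
  end.

Lemma mkE (j : 'I_K) : mk j = mscale (NngNum (p0 j)) (G j).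
Proof. by rewrite /mk (valK j). Qed.

Definition mixm := msum mk K.

Lemma mixmE A : mixm A = mixture p (fun j => (G j : set R -> \bar R)) A.
Proof.
by rewrite /mixm /msum /mixture; apply: eq_bigr => j _; rewrite mkE.
Qed.

Lemma int_mixm (D : set (measurableTypeR R)) (f : R -> \bar R) :
  measurable D -> (forall x, D x -> (0 <= f x)%E) -> measurable_fun D f ->
  (\int[mixm]_(x in D) f x = \sum_(j < K) (p j)%:E * \int[G j]_(x in D) f x)%E.
Proof.
move=> mD f0 mf; rewrite /mixm ge0_integral_measure_sum //.
by apply: eq_bigr => j _; rewrite mkE ge0_integral_mscale.
Qed.

Hypothesis p1 : \sum_(j < K) p j = 1.

Definition mixP := let _ := p1 in mixm.
HB.instance Definition _ := Measure.on mixP.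

Lemma mixP_setT : mixP setT = 1%E.
Proof.
rewrite /mixP mixmE /mixture.
under eq_bigr do rewrite probability_setT mule1.
by rewrite sumEFin p1.
Qed.

HB.instance Definition _ := Measure_isProbability.Build _ _ _ mixP mixP_setT.

End mix.
Arguments mixm {R K} G {p} p0.
Arguments mixmE {R K} G {p} p0 A.
Arguments int_mixm {R K} G {p} p0 D f.
Arguments mixP {R K} G {p} p0 p1.

Section cP.
Variables (R : realType) (S : set (measurableTypeR R)).
Hypothesis mS : measurable S.
Hypothesis hSpos : (0 < lebesgue_measure S)%E.
Variable P : probability (measurableTypeR R) R.

Lemma intA_ge0 (A : set R) : (0 <= \int[P]_(m in A) PhiS S m)%E.
Proof. by apply: integral_ge0 => m _; exact: PhiS_ge0. Qed.

Lemma intA_le (A : set R) : measurable A ->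
  (\int[P]_(m in A) PhiS S m <= \int[P]_m PhiS S m)%E.
Proof.
move=> mA; apply: ge0_subset_integral => //.
- exact: measurable_PhiS.
- by move=> m _; exact: PhiS_ge0.
Qed.

Lemma intT_le2 : (\int[P]_m PhiS S m <= 2%:E)%E.
Proof.
apply: (@le_trans _ _ (\int[P]_(m in setT) (cst 2%:E) m)%E).
  apply: ge0_le_integral => //.
  - by move=> m _; exact: PhiS_ge0.
  - exact: measurable_PhiS.
  - by move=> m _; exact: PhiS_le2.
rewrite integral_cst //.
have H1 : forall x : \bar R, x = 1%E -> (2%:E * x <= 2%:E)%E by move=> x ->; rewrite mule1.
apply: H1; exact: probability_setT.
Qed.

Lemma intT_gt0 : (0 < \int[P]_m PhiS S m)%E.
Proof.
apply: integral_gt0 => //.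
- exact: measurable_PhiS.
- by move=> m _; exact: PhiS_gt0.
- have H1 : forall x : \bar R, x = 1%E -> (0 < x)%E by move=> x ->; rewrite lte01.
  apply: H1; exact: probability_setT.
Qed.

Lemma intA_fin (A : set R) : measurable A ->
  (\int[P]_(m in A) PhiS S m)%E \is a fin_num.
Proof.
move=> mA; rewrite ge0_fin_numE ?(intA_ge0 A) //.
apply: (le_lt_trans (intA_le A mA)); apply: (le_lt_trans intT_le2). exact: ltry.
Qed.

Definition cc := fine (\int[P]_m PhiS S m)%E.
Definition aa (A : set R) := fine (\int[P]_(m in A) PhiS S m)%E.

Lemma ccE : (\int[P]_m PhiS S m)%E = cc%:E.
Proof. by rewrite /cc fineK // (intA_fin setT). Qed.

Lemma aaE A : measurable A -> (\int[P]_(m in A) PhiS S m)%E = (aa A)%:E.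
Proof. by move=> mA; rewrite /aa fineK // (intA_fin A). Qed.

Lemma cc_gt0 : 0 < cc.
Proof. by have := intT_gt0; rewrite ccE lte_fin. Qed.

Lemma cc_le2 : cc <= 2.
Proof. by have := intT_le2; rewrite ccE lee_fin. Qed.

Lemma TiltE A : measurable A -> Tilt S P A = (aa A / cc)%:E.
Proof. by move=> mA; rewrite /Tilt aaE // ccE /= EFinM. Qed.

End cP.
Arguments cc {R} S P.
Arguments aa {R} S P A.
Arguments cc_gt0 {R S} mS hSpos P.
Arguments cc_le2 {R S} mS P.
Arguments TiltE {R S} mS P A.
Arguments aaE {R S} mS P A.
Arguments ccE {R S} mS P.

Theorem propositionS1 (R : realType) (S : set (measurableTypeR R))
  (hS : measurable S) (hS0 : S `<=` [set x | 0 <= x])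
  (hSpos : (0 < lebesgue_measure S)%E)
  (K : nat) (G : 'I_K -> probability (measurableTypeR R) R) :
  (forall P : probability (measurableTypeR R) R,
     ConvexHull (fun j => (G j : set R -> \bar R)) P ->
     ConvexHull (fun j => Tilt S (G j)) (Tilt S P)) /\
  (forall H : set R -> \bar R,
     ConvexHull (fun j => Tilt S (G j)) H ->
     exists P : probability (measurableTypeR R) R,
       ConvexHull (fun j => (G j : set R -> \bar R)) P /\ eqdist H (Tilt S P)).
Proof.
have cj_gt0 j := cc_gt0 hS hSpos (G j).
have cj_neq0 j : cc S (G j) != 0 by rewrite gt_eqF.
split.
- move=> P [pi [[pi0 pi1] hP]].
  have intP A : measurable A ->
      (\int[P]_(m in A) PhiS S m)%E = (\sum_(j < K) pi j * aa S (G j) A)%:E.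
    move=> mA; rewrite (eq_measure_integral (mixm G pi0)); last first.
      by move=> B mB _; exact: (etrans (hP B mB) (esym (mixmE G pi0 B))).
    transitivity (\sum_(j < K) (pi j)%:E * \int[G j]_(x in A) PhiS S x)%E.
      apply: int_mixm => //; last exact: measurable_funTS (@measurable_PhiS _ _ hS).
      by move=> m _; exact: PhiS_ge0.
    by rewrite -sumEFin; apply: eq_bigr => j _; rewrite (aaE hS) // EFinM.
  have ccP : cc S P = \sum_(j < K) pi j * cc S (G j).
    by rewrite /cc intP // fineK.
  have ccP_gt0 := cc_gt0 hS hSpos P.
  exists (fun j => pi j * cc S (G j) / cc S P); split.
    split.
      by move=> j; rewrite divr_ge0 ?mulr_ge0 ?pi0 ?ltW.
    by rewrite -mulr_suml -ccP divff // gt_eqF.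
  move=> A mA; rewrite TiltE // /mixture.
  under eq_bigr do rewrite TiltE //.
  have hA : aa S P A = \sum_(j < K) pi j * aa S (G j) A by rewrite /aa intP.
  rewrite hA; under eq_bigr do rewrite -EFinM.
  rewrite sumEFin; congr EFin; rewrite mulr_suml; apply: eq_bigr => j _.
  have := cj_neq0 j; have := gt_eqF ccP_gt0.
  move: (cc S P) (cc S (G j)) => c1 c2 h1 h2.
  by field; rewrite h1 h2.
move=> H [w [[w0 w1] hH]].
pose Dd := \sum_(k < K) w k / cc S (G k).
have Dd_ge : 2^-1 <= Dd.
  have : \sum_(k < K) w k * 2^-1 <= Dd.
    apply: ler_sum => k _; apply: ler_wpM2l; first exact: w0.
    by rewrite lef_pV2 ?posrE ?(cc_le2 hS) ?cj_gt0.
  by rewrite -mulr_suml w1 mul1r.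
have Dd_gt0 : 0 < Dd by apply: lt_le_trans Dd_ge; rewrite invr_gt0.
pose p j := w j / cc S (G j) / Dd.
have p0 j : 0 <= p j by rewrite divr_ge0 ?divr_ge0 ?w0 ?ltW ?cj_gt0.
have p1 : \sum_(j < K) p j = 1 by rewrite -mulr_suml divff // gt_eqF.
exists (mixP G p0 p1); split.
  exists p; split => //; move=> A mA; exact: (mixmE G p0 A).
move=> A mA; apply: (etrans (hH A mA)).
have intQ B : measurable B ->
    (\int[mixP G p0 p1]_(m in B) PhiS S m)%E = (\sum_(j < K) p j * aa S (G j) B)%:E.
  move=> mB.
  transitivity (\sum_(j < K) (p j)%:E * \int[G j]_(x in B) PhiS S x)%E.
    apply: int_mixm => //; last exact: measurable_funTS (@measurable_PhiS _ _ hS).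
    by move=> m _; exact: PhiS_ge0.
  by rewrite -sumEFin; apply: eq_bigr => j _; rewrite (aaE hS) // EFinM.
have ccQ : cc S (mixP G p0 p1) = Dd^-1.
  rewrite /cc intQ //=.
  transitivity (\sum_(j < K) w j * Dd^-1).
    apply: eq_bigr => j _; rewrite /p; change (aa S (G j) setT) with (cc S (G j)).
    have h1 := cj_neq0 j; have h2 := gt_eqF Dd_gt0.
    by field; rewrite ?h1 ?h2.
  by rewrite -mulr_suml w1 mul1r.
have aaQ : aa S (mixP G p0 p1) A = \sum_(j < K) p j * aa S (G j) A.
  by rewrite /aa intQ.
rewrite /mixture (TiltE hS) // aaQ ccQ invrK.
under eq_bigr do rewrite (TiltE hS) // -EFinM.
rewrite sumEFin; congr EFin; rewrite mulr_suml; apply: eq_bigr => j _.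
rewrite /p.
have h1 := cj_neq0 j; have h2 := gt_eqF Dd_gt0.
by field; rewrite ?h1 ?h2.
Qed.
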